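(* Let $c\ge2$, $q\in[0,c-1]$, and let $\Gamma$ be a $c$-uniform unoriented hypergraph with $E\ne\varnothing$ and no isolated vertices, with smallest normalized Laplacian eigenvalue $\lambda_1$ and with $\chi^{q\text{-t}}=\chi^{q\text{-t}}(\Gamma)\ge2$. If $\chi^{q\text{-t}}=\dfrac{c-\lambda_1}{q+1-\lambda_1}$, then for every $q$-tailored $\chi^{q\text{-t}}$-coloring with color classes $V_1,\dots,V_{\chi^{q\text{-t}}}$: for every $i$ and every $v\in V_i$, $\sum_{w\in V_i}|A_{v,w}|=q\deg v$; and for all distinct $i,j$, the function $g_{ij}$ is an eigenfunction of $L$ with eigenvalue \[ \lambda_1=\frac{(q+1)\chi^{q\text{-t}}-c}{\chi^{q\text{-t}}-1}. \]
   Context: A hypergraph has finite vertex set $V$ and edge set $E\subseteq\mathcal P(V)$; it is $c$-uniform if $|e|=c$ for all $e$, and unoriented means all incidences have orientation $+1$. $\deg v=|\{e\in E: v\in e\}|\ge1$, $D=\mathrm{diag}(\deg v)$, adjacency $A_{v,v}=0$ and $A_{v,w}=-|\{e\in E: v,w\in e\}|$ for $v\ne w$, normalized Laplacian $L=\mathrm{Id}-D^{-1}A$ with eigenvalues $\lambda_1\le\dots\le\lambda_N$. For $q\in[0,c-1]$, a $k$-coloring with color classes $V_1,\dots,V_k$ is $q$-tailored if for all $i$ and all $v\in V_i$, $\sum_{w\in V_i}|A_{v,w}|\le q\deg v$; $\chi^{q\text{-t}}$ is the least $k$ admitting one. For color classes and distinct $i,j$, $g_{ij}(w)=1$ if $w\in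 V_i$, $-1$ if $w\in V_j$, $0$ otherwise. *)

(* Defs.v *)
From HB Require Import structures.
From mathcomp Require Import all_boot all_order all_algebra.
From mathcomp Require Import reals.
Set Implicit Arguments. Unset Strict Implicit. Unset Printing Implicit Defensive.
Import Order.TTheory GRing.Theory Num.Theory.
Local Open Scope ring_scope.

Section Hyper.
Variable R : realType.
Variable n : nat.
Variable E : {set {set 'I_n}}.

Definition uniform (c : nat) : Prop := forall e, e \in E -> #|e| = c.

Definition hdeg (v : 'I_n) : nat := #|[set e in E | v \in e]|.

Definition no_isolated : Prop := forall v, (1 <= hdeg v)%N.

Definition hadj : 'M[R]_n :=
  \matrix_(v, w) (if v == w then 0
                  else - (#|[set e in E | (v \in e) && (w \in e)]|)%:R).

Definition hdegmx : 'M[R]_n := \matrix_(v, w) (if v == w then (hdeg v)%:R else 0).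

Definition hlap : 'M[R]_n := 1%:M - invmx hdegmx *m hadj.

Definition smallest_eigenvalue (M : 'M[R]_n) (lam : R) : Prop :=
  eigenvalue M lam /\ (forall mu, eigenvalue M mu -> lam <= mu).

(* A k-coloring is a map col : 'I_n -> 'I_k; class V_i = col^{-1}(i). *)
Definition q_tailored (q : R) (k : nat) (col : 'I_n -> 'I_k) : Prop :=
  forall v, \sum_(w | col w == col v) `|hadj v w| <= q * (hdeg v)%:R.

Definition admits_q_tailored (q : R) (k : nat) : Prop :=
  exists col : 'I_n -> 'I_k, q_tailored q col.

Definition is_chi_qt (q : R) (k : nat) : Prop :=
  admits_q_tailored q k /\ (forall k', admits_q_tailored q k' -> (k <= k')%N).

Definition gij (k : nat) (col : 'I_n -> 'I_k) (i j : 'I_k) : 'cV[R]_n :=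
  \col_w (if col w == i then 1 else if col w == j then -1 else 0).

Definition eigenfunction (M : 'M[R]_n) (g : 'cV[R]_n) (lam : R) : Prop :=
  g != 0 /\ M *m g = lam *: g.

End Hyper.

(* Main.v *)
Require Import Defs.
From HB Require Import structures.
From mathcomp Require Import classical_sets boolp topology normedtype derive.
From mathcomp Require Import all_boot all_order all_algebra.
From mathcomp Require Import reals ring lra.
Import numFieldTopology.Exports numFieldNormedType.Exports.
Set Implicit Arguments. Unset Strict Implicit. Unset Printing Implicit Defensive.
Import Order.TTheory GRing.Theory Num.Theory.
Local Open Scope ring_scope.

Section Quad.
Local Open Scope classical_set_scope.
Variable R : realType.

Definition Qf n (X : 'M[R]_n) (f : 'rV[R]_n) : R := (f *m X *m f^T) 0 0.

Lemma QfE n (X : 'M[R]_n) f :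
  Qf X f = \sum_j (\sum_i f 0 i * X i j) * f 0 j.
Proof.
rewrite /Qf mxE; apply: eq_bigr => j _; rewrite !mxE; congr (_ * _).
Qed.

Lemma Qf_cont n (X : 'M[R]_n) : continuous (fun f : 'rV[R]_n => Qf X f).
Proof.
have -> : (fun f : 'rV[R]_n => Qf X f) = (fun f => \sum_j (\sum_i f 0 i * X i j) * f 0 j).
  by apply: funext => f; rewrite QfE.
apply: (continuous_big add_continuous) => j _.
move=> f; apply: continuousM; last exact: coord_continuous.
apply: (continuous_big add_continuous) => i _ g.
apply: continuousM; first exact: coord_continuous.
exact: cst_continuous.
Qed.

Lemma QfZ n (X : 'M[R]_n) a f : Qf X (a *: f) = a ^+ 2 * Qf X f.
Proof. by rewrite /Qf !linearZ /= -!scalemxAl !scalerA !mxE -expr2. Qed.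

Lemma QfB n (X Y : 'M[R]_n) f : Qf (X - Y) f = Qf X f - Qf Y f.
Proof. by rewrite /Qf mulmxBr mulmxBl !mxE. Qed.

Lemma QfS n (X : 'M[R]_n) a f : Qf (a *: X) f = a * Qf X f.
Proof. by rewrite /Qf -scalemxAr -scalemxAl !mxE. Qed.

Lemma Qf0 n (X : 'M[R]_n) : Qf X 0 = 0.
Proof. by rewrite /Qf !mul0mx mxE. Qed.

Lemma Qf_diag n (d : 'rV[R]_n) f : Qf (diag_mx d) f = \sum_i d 0 i * f 0 i ^+ 2.
Proof.
rewrite QfE; apply: eq_bigr => j _.
rewrite (bigD1 j) //= big1 ?addr0; last first.
  by move=> i /negbTE ij; rewrite ?mxE ij mulr0n mulr0.
by rewrite !mxE eqxx mulr1n expr2 mulrCA mulrA.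
Qed.

Lemma addmxE m k (A B : 'M[R]_(m, k)) i j : (A + B) i j = A i j + B i j.
Proof. by rewrite mxE. Qed.
Lemma scalemxE m k (A : 'M[R]_(m, k)) a i j : (a *: A) i j = a * A i j.
Proof. by rewrite mxE. Qed.

Lemma psd_kernel n (X : 'M[R]_n) g :
  X^T = X -> (forall f, 0 <= Qf X f) -> Qf X g = 0 -> g *m X = 0.
Proof.
move=> Xs Xp g0; apply/rowP => j; rewrite [RHS]mxE.
set h : 'rV[R]_n := delta_mx 0 j.
have bE : (g *m X *m h^T) 0 0 = (g *m X) 0 j.
  rewrite mxE (bigD1 j) //= big1 ?addr0; last first.
    by move=> i /negbTE ij; rewrite !mxE ij andbF mulr0.
  by rewrite !mxE !eqxx mulr1.
have hgE : (h *m X *m g^T) 0 0 = (g *m X *m h^T) 0 0.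
  have -> : h *m X *m g^T = (g *m X *m h^T)^T.
    by rewrite !trmx_mul trmxK Xs mulmxA.
  by rewrite mxE.
set b := (g *m X) 0 j; set a := Qf X h.
have a0 : 0 <= a by exact: Xp.
have key t : 0 <= 2 * t * b + t ^+ 2 * a.
  have := Xp (g + t *: h).
  rewrite /Qf [(g + _)^T]linearD /= [(t *: h)^T]linearZ /=.
  rewrite !mulmxDl !mulmxDr -!scalemxAl -!scalemxAr !scalerA.
  rewrite !addmxE !scalemxE -/(Qf X g) g0 hgE bE -/(Qf X h) -/a -/b.
  move=> H; have -> : 2 * t * b + t ^+ 2 * a = 0 + t * b + (t * b + t * t * a) by ring.
  exact: H.
have := key (- b / (a + 1)).
have a1 : 0 < a + 1 by rewrite ltr_wpDl.
set t := - b / (a + 1).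
have -> : 2 * t * b + t ^+ 2 * a = - (b ^+ 2 * (a + 2)) / (a + 1) ^+ 2.
  rewrite /t; field; by rewrite gt_eqF.
rewrite pmulr_lge0 ?invr_gt0 ?exprn_gt0 // oppr_ge0.
rewrite pmulr_lle0 ?ltr_wpDl // => hb.
by apply/eqP; rewrite -sqrf_eq0 eq_le hb sqr_ge0.
Qed.


Lemma QfD_ge n (d : 'rV[R]_n) (f : 'rV[R]_n) i : (forall j, 0 <= d 0 j) ->
  d 0 i * f 0 i ^+ 2 <= Qf (diag_mx d) f.
Proof.
move=> d0; rewrite Qf_diag (bigD1 i) //= lerDl sumr_ge0 // => j _.
by rewrite mulr_ge0 ?sqr_ge0.
Qed.

Lemma QfD_eq0 n (d : 'rV[R]_n) (f : 'rV[R]_n) : (forall j, 1 <= d 0 j) ->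
  Qf (diag_mx d) f = 0 -> f = 0.
Proof.
move=> d1 H; apply/rowP => i; rewrite mxE.
have d0 j : 0 <= d 0 j by apply: le_trans (d1 j); rewrite ler01.
have := QfD_ge f i d0; rewrite H => h.
have h2 : f 0 i ^+ 2 <= 0.
  apply: le_trans h; rewrite ler_peMl ?sqr_ge0 //.
by apply/eqP; rewrite -sqrf_eq0 eq_le h2 sqr_ge0.
Qed.

Lemma rayleigh n (M : 'M[R]_n) (d : 'rV[R]_n) : (0 < n)%N ->
  (forall i, 1 <= d 0 i) -> M^T = M ->
  exists mu, (exists2 g : 'rV[R]_n, g != 0 & g *m M = mu *: (g *m diag_mx d))
     /\ (forall f, mu * Qf (diag_mx d) f <= Qf M f).
Proof.
move=> n0 d1 Ms.
have d0 j : 0 <= d 0 j by apply: le_trans (d1 j); rewrite ler01.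
set D := diag_mx d.
set A := (fun g => Qf D g) @^-1` [set x : R | x = 1].
have A0 : A !=set0.
  pose i0 := Ordinal n0.
  exists ((Num.sqrt (d 0 i0))^-1 *: delta_mx 0 i0).
  rewrite /A /= QfZ Qf_diag (bigD1 i0) //= big1 ?addr0; last first.
    by move=> i /negbTE ii; rewrite !mxE ii andbF expr0n mulr0.
  rewrite !mxE !eqxx /= expr1n mulr1 exprVn sqr_sqrtr ?d0 // mulVf //.
  by rewrite gt_eqF // (lt_le_trans ltr01).
have cA : compact A.
  apply: (@subclosed_compact _ _ [set v : 'rV[R]_n | forall i, `[(-1 : R), 1]%classic (v ord0 i)]).
  - apply: (@preimage_closed _ _ (fun g : 'rV[R]_n => Qf D g) [set x : R | x = 1]).
      by move=> x _; exact: (@Qf_cont n D x).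
    exact: closed_eq.
  - apply: (@rV_compact _ _ (fun=> `[(-1 : R), 1]%classic)) => _; exact: segment_compact.
  - move=> v; rewrite /A /= => Hv i; rewrite /= in_itv /=.
    have := QfD_ge v i d0; rewrite Hv => h.
    have h2 : v 0 i ^+ 2 <= 1.
      by apply: le_trans h; rewrite ler_peMl ?sqr_ge0 //.
    apply/andP; split; nra.
have [g gA gmin] := EVT_min_rV A0 cA (continuous_subspaceT (@Qf_cont n M)).
have Dg : Qf D g = 1 by move: gA; rewrite in_setE.
set mu := Qf M g.
have ray f : mu * Qf D f <= Qf M f.
  have [->|f0] := eqVneq f 0; first by rewrite !Qf0 mulr0.
  have N0 : 0 < Qf D f.
    rewrite lt_def; apply/andP; split.
      by apply: contra f0 => /eqP /QfD_eq0 ->.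
    by rewrite Qf_diag sumr_ge0 // => j _; rewrite mulr_ge0 ?sqr_ge0.
  have hA : ((Num.sqrt (Qf D f))^-1 *: f) \in A.
    by rewrite in_setE /A /= QfZ exprVn (sqr_sqrtr (ltW N0)) mulVf ?gt_eqF.
  have := gmin _ hA; rewrite QfZ exprVn (sqr_sqrtr (ltW N0)).
  by rewrite -/mu mulrC ler_pdivlMr.
exists mu; split => //.
exists g.
  by apply: contra_eq_neq Dg => ->; rewrite Qf0 eq_sym oner_neq0.
have Xs : (M - mu *: D)^T = M - mu *: D.
  by rewrite linearB /= linearZ /= Ms /D tr_diag_mx.
have PSD : forall f, 0 <= Qf (M - mu *: D) f.
  by move=> f; rewrite QfB QfS subr_ge0.
have Z : Qf (M - mu *: D) g = 0 by rewrite QfB QfS Dg mulr1 subrr.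
have := psd_kernel Xs PSD Z.
by move=> /eqP; rewrite mulmxBr -scalemxAr subr_eq0 => /eqP.
Qed.

End Quad.

Section Comb.
Variable R : realType.

Lemma sum_delta k (F : 'I_k -> R) a : \sum_j (a == j)%:R * F j = F a.
Proof.
rewrite (bigD1 a) //= eqxx mul1r big1 ?addr0 // => j /negbTE.
by rewrite eq_sym => ->; rewrite mul0r.
Qed.

Lemma pair_sum k (a b : 'I_k) :
  \sum_i \sum_j (((a == i)%:R - (a == j)%:R) * ((b == i)%:R - (b == j)%:R)) =
  2 * k%:R * (a == b)%:R - 2 :> R.
Proof.
have s1 (c : 'I_k) : \sum_j (c == j)%:R = 1 :> R.
  by rewrite (bigD1 c) //= eqxx big1 ?addr0 // => j /negbTE; rewrite eq_sym => ->.
have s2 : \sum_j (a == j)%:R * (b == j)%:R = (a == b)%:R :> R.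
  by rewrite sum_delta eq_sym.
have inner i : \sum_j (((a == i)%:R - (a == j)%:R) * ((b == i)%:R - (b == j)%:R)) =
   k%:R * ((a == i)%:R * (b == i)%:R) - (a == i)%:R - (b == i)%:R + (a == b)%:R :> R.
  rewrite (eq_bigr (fun j => ((a == i)%:R * (b == i)%:R : R) - ((a == i)%:R * (b == j)%:R
      + (b == i)%:R * (a == j)%:R) + (a == j)%:R * (b == j)%:R)); last first.
    by move=> j _; ring.
  rewrite big_split /= sumrB big_split /= sumr_const card_ord -!mulr_sumr s1 s2.
  by rewrite s1 mulr1 -mulr_natl; ring.
rewrite (eq_bigr _ (fun i _ => inner i)).
rewrite !big_split /= !sumrN sumr_const card_ord -mulr_sumr s2 !s1.
rewrite -mulr_natl; ring.
Qed.

End Comb.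

Section Hyp.
Variables (R : realType) (n : nat) (E : {set {set 'I_n}}).

Lemma hadj_sym : (hadj R E)^T = hadj R E.
Proof.
apply/matrixP => v w; rewrite !mxE eq_sym; case: eqP => // _.
congr (- _ %:R); apply: eq_card => e; rewrite !inE; congr (_ && _).
by rewrite andbC.
Qed.

Lemma hadj_abs v w : `|hadj R E v w| =
  (if v == w then 0 else #|[set e in E | (v \in e) && (w \in e)]|)%:R.
Proof. by rewrite mxE; case: eqP => _; rewrite ?normr0 ?normrN ?normr_nat. Qed.

Lemma hadjE v w : hadj R E v w = - `|hadj R E v w|.
Proof. by rewrite hadj_abs mxE; case: eqP; rewrite ?oppr0. Qed.

Lemma hdegmxE : hdegmx R E = diag_mx (\row_v (hdeg E v)%:R).
Proof.
by apply/matrixP => v w; rewrite !mxE; case: eqP => [->|]; rewrite ?mulr1n ?mulr0n.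
Qed.

Lemma hdeg_unit : no_isolated E -> hdegmx R E \in unitmx.
Proof.
move=> ni; rewrite hdegmxE unitmxE det_diag unitfE.
by apply/prodf_neq0 => v _; rewrite mxE pnatr_eq0 -lt0n.
Qed.

Lemma DL_eq : no_isolated E -> hdegmx R E *m hlap R E = hdegmx R E - hadj R E.
Proof.
move=> ni; rewrite /hlap mulmxBr mulmx1 mulmxA mulmxV ?mul1mx //.
exact: hdeg_unit.
Qed.

Lemma Mx_entry v w : (hdegmx R E - hadj R E) v w =
  (v == w)%:R * (hdeg E v)%:R + `|hadj R E v w|.
Proof.
rewrite [LHS]mxE [X in _ + X]mxE [hdegmx _ _ v w]mxE {1}hadjE opprK.
by case: eqP => [->|_]; rewrite ?mul1r ?mul0r.
Qed.

Lemma cardR (T : finType) (A : {pred T}) : (#|A|%:R : R) = \sum_(x in A) 1.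
Proof. by rewrite sumr_const. Qed.

Lemma row_abs_sum c : uniform E c -> forall v,
  \sum_w `|hadj R E v w| = (c%:R - 1) * (hdeg E v)%:R.
Proof.
move=> un v.
have step1 w : `|hadj R E v w| =
    \sum_(e in E) ((v != w) && (v \in e) && (w \in e))%:R.
  rewrite hadj_abs; case: eqP => [->|_] /=.
    by rewrite big1.
  rewrite cardR [RHS]big_mkcond [LHS]big_mkcond /=; apply: eq_bigr => e _; rewrite !inE.
  by case: (e \in E); case: (v \in e); case: (w \in e).
under eq_bigr do rewrite step1.
rewrite exchange_big /=.
rewrite /hdeg cardR [LHS]big_mkcond mulr_sumr [RHS]big_mkcond /=.
apply: eq_bigr => e _; rewrite inE.
case eE: (e \in E) => //=.
case ve: (v \in e) => /=; last by rewrite big1 // => w _; rewrite andbF.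
rewrite mulr1; under eq_bigr do rewrite andbT.
have -> : \sum_w ((v != w) && (w \in e))%:R = \sum_(w in e) 1 - \sum_(w in e | w == v) (1 : R).
  rewrite [in RHS](bigID (fun w => w == v)) /= addrAC subrr add0r.
  rewrite [RHS]big_mkcond /=; apply: eq_bigr => w _.
  rewrite eq_sym; case: (w == v) => /=; first by rewrite andbF.
  by rewrite andbT; case: (w \in e).
rewrite -cardR (un e eE) (big_pred1 v) //.
move=> w; rewrite !inE; case: eqP => [->|]; rewrite ?ve ?andbF //.
Qed.


Lemma colors_used (q : R) k (col : 'I_n -> 'I_k) : is_chi_qt E q k -> (2 <= k)%N ->
  q_tailored E q col -> forall i, exists w, col w = i.
Proof.
move=> [_ kmin] k2 tc i.
case: (pickP (fun w => col w == i)) => [w /eqP <-|none]; first by exists w.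
exfalso.
move: col kmin k2 tc i none; case: k => [|[|m]] col kmin k2 tc i none //.
pose col' w := odflt ord0 (unlift i (col w)).
have hneq w : i != col w by rewrite eq_sym; apply/negbT; exact: none.
have key v w : (col' w == col' v) = (col w == col v).
  case: (unlift_some (hneq w)) => x lx ux; case: (unlift_some (hneq v)) => y ly uy.
  rewrite /col' ux uy /= lx ly; apply/eqP/eqP => [-> //| /lift_inj -> //].
have : admits_q_tailored E q m.+1.
  exists col' => v; rewrite (eq_bigl _ _ (key v)); exact: tc.
by move=> /kmin; rewrite ltnn.
Qed.

End Hyp.

Lemma oppmxE (R : realType) m k (A : 'M[R]_(m, k)) i j : (- A) i j = - A i j.
Proof. by rewrite mxE. Qed.

Theorem mainTheorem12 (R : realType) (n : nat) (E : {set {set 'I_n}})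
  (c : nat) (q lam1 : R) (chi : nat) :
  (2 <= c)%N -> 0 <= q -> q <= (c%:R - 1) ->
  uniform E c -> E != set0 -> no_isolated E ->
  smallest_eigenvalue (hlap R E) lam1 ->
  is_chi_qt E q chi -> (2 <= chi)%N ->
  chi%:R = (c%:R - lam1) / (q + 1 - lam1) ->
  forall col : 'I_n -> 'I_chi, q_tailored E q col ->
    (forall v, \sum_(w | col w == col v) `|hadj R E v w| = q * (hdeg E v)%:R) /\
    (forall i j : 'I_chi, i != j -> eigenfunction (hlap R E) (gij R col i j) lam1) /\
    lam1 = ((q + 1) * chi%:R - c%:R) / (chi%:R - 1).
Proof.
move=> c2 q0 qc un E0 ni [eig1 lmin] chiq chi2 hchi col tc.
set D := hdegmx R E; set L := hlap R E; set M := D - hadj R E.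
set d : 'rV[R]_n := \row_v (hdeg E v)%:R.
have DE : D = diag_mx d by exact: hdegmxE.
have DU : D \in unitmx by exact: hdeg_unit.
have DL : D *m L = M by exact: DL_eq.
have n0 : (0 < n)%N.
  case: (posnP n) => // n_0; exfalso.
  move/eigenvalueP: eig1 => [v _ /negP]; apply; apply/eqP/rowP => i.
  by have := ltn_ord i; rewrite {2}n_0.
have d1 i : 1 <= d 0 i by rewrite mxE ler1n; exact: ni.
have Ms : M^T = M by rewrite /M linearB /= hadj_sym DE tr_diag_mx.
have [mu [[g g0 gM] ray]] := rayleigh n0 d1 Ms.
rewrite -DE in gM ray.
have mueig : eigenvalue L mu.
  apply/eigenvalueP; exists (g *m D); first by rewrite -mulmxA DL gM.
  by apply: contra g0 => /eqP gD; apply/eqP; rewrite -(mulmxK DU g) gD mul0mx.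
have lmu := lmin mu mueig.
have QD0 f : 0 <= Qf D f.
  by rewrite DE Qf_diag sumr_ge0 // => i _; rewrite mulr_ge0 ?sqr_ge0 // (le_trans ler01).
have ray1 f : lam1 * Qf D f <= Qf M f.
  by apply: le_trans (ray f); rewrite ler_wpM2r.
set X := M - lam1 *: D.
have Xs : X^T = X by rewrite /X linearB /= linearZ /= Ms DE tr_diag_mx.
have Xp f : 0 <= Qf X f by rewrite QfB QfS subr_ge0.
set k : R := chi%:R.
have k2 : 2 <= k by rewrite /k (ler_nat R 2).
have qne : q + 1 - lam1 != 0.
  apply/eqP => h; move: hchi; rewrite h invr0 mulr0 -/k => k0.
  by move: k2; rewrite k0; lra.
have rel : lam1 * (k - 1) = (q + 1) * k - c%:R.
  have H : k * (q + 1 - lam1) = c%:R - lam1 by rewrite /k hchi divfK.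
  apply/eqP; rewrite -subr_eq0.
  have -> : lam1 * (k - 1) - ((q + 1) * k - c%:R) = (c%:R - lam1) - k * (q + 1 - lam1) by ring.
  by rewrite H subrr.
have k1 : k - 1 != 0 by rewrite subr_eq0; apply/eqP => h; move: k2; rewrite h; lra.
pose h i j : 'rV[R]_n := \row_v ((col v == i)%:R - (col v == j)%:R).
pose T v := \sum_(w | col w == col v) `|hadj R E v w|.
have Xe v w : X v w = (v == w)%:R * ((1 - lam1) * (hdeg E v)%:R) + `|hadj R E v w|.
  rewrite /X addmxE oppmxE scalemxE Mx_entry /D [hdegmx R E v w]mxE.
  by case: eqP => _ /=; ring.
have E1 a b : Qf X (h a b) = \sum_w \sum_v X v w *
    (((col v == a)%:R - (col v == b)%:R) * ((col w == a)%:R - (col w == b)%:R)).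
  rewrite QfE; apply: eq_bigr => w _; rewrite mulr_suml; apply: eq_bigr => v _.
  by rewrite !mxE; ring.
have sumF : \sum_i \sum_j Qf X (h i j) = 2 * k * \sum_v (T v - q * (hdeg E v)%:R).
  under eq_bigr do under eq_bigr do rewrite E1.
  under eq_bigr do rewrite exchange_big.
  rewrite exchange_big.
  under eq_bigr do under eq_bigr do rewrite exchange_big.
  under eq_bigr do rewrite exchange_big.
  have inner v w : \sum_i \sum_j X v w *
      (((col v == i)%:R - (col v == j)%:R) * ((col w == i)%:R - (col w == j)%:R)) =
      X v w * (2 * k * (col v == col w)%:R - 2).
    under eq_bigr do rewrite -mulr_sumr.
    by rewrite -mulr_sumr pair_sum.
  under eq_bigr do under eq_bigr do rewrite inner.
  rewrite exchange_big /= mulr_sumr; apply: eq_bigr => v _.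
  have s1 : \sum_w X v w = (1 - lam1) * (hdeg E v)%:R + (c%:R - 1) * (hdeg E v)%:R.
    under eq_bigr do rewrite Xe.
    by rewrite big_split /= (row_abs_sum R un) (sum_delta (fun=> (1 - lam1) * (hdeg E v)%:R)).
  have s2 : \sum_w (col v == col w)%:R * X v w = (1 - lam1) * (hdeg E v)%:R + T v.
    have -> : \sum_w (col v == col w)%:R * X v w = \sum_(w | col w == col v) X v w.
      rewrite [RHS]big_mkcond; apply: eq_bigr => w _; rewrite eq_sym.
      by case: eqP => _; rewrite ?mul1r ?mul0r.
    under eq_bigr do rewrite Xe.
    rewrite big_split /= (bigD1 v) //= eqxx mul1r big1 ?addr0 // => w /andP [_ /negbTE].
    by rewrite eq_sym => ->; rewrite mul0r.
  have -> : \sum_w X v w * (2 * k * (col v == col w)%:R - 2) =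
      2 * k * \sum_w (col v == col w)%:R * X v w - 2 * \sum_w X v w.
    rewrite !mulr_sumr -sumrB; apply: eq_bigr => w _; ring.
  rewrite s1 s2; apply/eqP; rewrite -subr_eq0.
  have -> : 2 * k * ((1 - lam1) * (hdeg E v)%:R + T v) -
     2 * ((1 - lam1) * (hdeg E v)%:R + (c%:R - 1) * (hdeg E v)%:R) -
     2 * k * (T v - q * (hdeg E v)%:R) =
     2 * (hdeg E v)%:R * ((q + 1) * k - c%:R - lam1 * (k - 1)) by ring.
  by rewrite rel subrr mulr0.
have k0 : 0 < 2 * k by lra.
have Tle v : T v <= q * (hdeg E v)%:R by exact: tc.
have S0 : \sum_v (T v - q * (hdeg E v)%:R) = 0.
  apply/eqP; rewrite eq_le; apply/andP; split.
    by apply: sumr_le0 => v _; rewrite subr_le0.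
  have : 0 <= \sum_i \sum_j Qf X (h i j).
    by apply: sumr_ge0 => i _; apply: sumr_ge0 => j _.
  by rewrite sumF pmulr_rge0.
have Teq v : T v = q * (hdeg E v)%:R.
  have S1 : \sum_v (q * (hdeg E v)%:R - T v) = 0.
    by move: S0; rewrite !sumrB => /eqP; rewrite subr_eq0 => /eqP ->; rewrite subrr.
  apply/eqP; rewrite eq_sym -subr_eq0; apply/eqP.
  by apply: (psumr_eq0P _ S1) => // w _; rewrite subr_ge0.
have F0 i j : Qf X (h i j) = 0.
  have SS : \sum_i \sum_j Qf X (h i j) = 0 by rewrite sumF S0 mulr0.
  have Si : \sum_j Qf X (h i j) = 0.
    by apply: (psumr_eq0P _ SS) => // a _; apply: sumr_ge0.
  by apply: (psumr_eq0P _ Si).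
split; first exact: Teq.
split; last by rewrite -rel mulfK.
move=> i j ij.
have gE : gij R col i j = (h i j)^T.
  apply/matrixP => v z; rewrite !mxE.
  case: eqP => [ci|_]; last first.
    case: (col v == j); first by rewrite [false%:R]/= [true%:R]/= sub0r.
    by rewrite [false%:R]/= subrr.
  have -> : (col v == j) = false by apply/negbTE; rewrite ci.
  by rewrite [false%:R]/= [true%:R]/= subr0.
have hX : h i j *m X = 0 by exact: psd_kernel Xs Xp (F0 i j).
have Xh : X *m (h i j)^T = 0 by rewrite -Xs -trmx_mul hX trmx0.
have Mg : M *m gij R col i j = lam1 *: (D *m gij R col i j).
  apply/eqP; rewrite -subr_eq0 scalemxAl -mulmxBl gE; exact/eqP.
split.
  have [w cw] := colors_used chiq chi2 tc i.
  apply/negP => /eqP /matrixP /(_ w 0); rewrite !mxE cw eqxx.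
  by move/eqP; rewrite oner_eq0.
rewrite -(mulKmx DU (L *m gij R col i j)) [D *m (L *m _)]mulmxA DL Mg -scalemxAr mulKmx //.
Qed.
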